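(* Let $Z_1,\dots,Z_d$ be nonzero complex numbers with $|Z_1|\le\cdots\le|Z_d|$, not all of the same modulus, let $R=\min\{|Z_{i+1}|/|Z_i| : |Z_{i+1}|>|Z_i|\}$ and $I=\{i: 1\le i\le d-1,\ |Z_i|<|Z_{i+1}|\}\cup\{0,d\}$. Let $i_1<i_2$ be successive elements of $I$ (i.e. both in $I$ and no element of $I$ lies strictly between them), and let $i_1<l<i_2$. Then \[ |\sigma_{d-l}(Z)|\le\left(\binom{i_2-i_1}{i_2-l}+c'\right)|Z_{i_2}|^{i_2-l}\,|Z_{i_2+1}|\cdots|Z_d|, \] where $c'=\left(\binom{d}{l}-\binom{i_2-i_1}{i_2-l}\right)R^{-1}<2^dR^{-1}$.
   Context: $\sigma_k(Z)=\sum_{j_1<\dots<j_k}Z_{j_1}\cdots Z_{j_k}$ denotes the $k$-th elementary symmetric function of $Z=(Z_1,\dots,Z_d)$; an empty product equals $1$. *)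

(* Defs.v *)
From HB Require Import structures.
From mathcomp Require Import all_boot all_order all_algebra.
Set Implicit Arguments. Unset Strict Implicit. Unset Printing Implicit Defensive.
Import Order.TTheory GRing.Theory Num.Theory.
Local Open Scope ring_scope.

(* Convention: Z : nat -> C, and only Z 1, ..., Z d are used (paper's 1-based
   indexing).  C is any numClosedFieldType (e.g. complex numbers). *)

Definition elem_sym (C : numClosedFieldType) (d : nat) (Z : nat -> C) (k : nat) : C :=
  \sum_(S : {set 'I_d} | #|S| == k) \prod_(j in S) Z j.+1.

Definition inI (C : numClosedFieldType) (d : nat) (Z : nat -> C) (i : nat) : bool :=
  [|| i == 0%N, i == d | [&& (1 <= i)%N, (i <= d.-1)%N & `|Z i| < `|Z i.+1|]].

Definition is_min_ratio (C : numClosedFieldType) (d : nat) (Z : nat -> C) (R : C) : Prop :=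
  (exists i, [/\ (1 <= i)%N, (i < d)%N, `|Z i| < `|Z i.+1| & R = `|Z i.+1| / `|Z i|])
  /\ (forall i, (1 <= i)%N -> (i < d)%N -> `|Z i| < `|Z i.+1| -> R <= `|Z i.+1| / `|Z i|).

(* Main.v *)
Require Import Defs.
From HB Require Import structures.
From mathcomp Require Import all_boot all_order all_algebra.
From mathcomp Require Import zify ring.
Set Implicit Arguments. Unset Strict Implicit. Unset Printing Implicit Defensive.
Import Order.TTheory GRing.Theory Num.Theory.
Local Open Scope ring_scope.

Lemma count_iota_int (a b d : nat) : (a <= b <= d)%N ->
  count (fun j => (a <= j < b)%N) (iota 0 d) = (b - a)%N.
Proof.
move=> /andP[hab hbd].
have -> : d = (a + (b - a) + (d - b))%N by lia.
rewrite !iotaD !count_cat add0n.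
rewrite (@eq_in_count _ _ pred0); last first.
  by move=> x; rewrite mem_iota => /andP[_ h]; apply/negbTE; rewrite negb_and -ltnNge; apply/orP; left; lia.
rewrite count_pred0.
rewrite (@eq_in_count _ _ predT (iota a _)); last first.
  by move=> x; rewrite mem_iota => /andP[h1 h2]; apply/andP; split; lia.
rewrite count_predT size_iota.
rewrite (@eq_in_count _ _ pred0 (iota _ (d - b))); last first.
  by move=> x; rewrite mem_iota => /andP[h1 h2]; apply/negbTE; rewrite negb_and; apply/orP; right; rewrite -leqNgt; lia.
by rewrite count_pred0; lia.
Qed.

Lemma card_int (d a b : nat) : (a <= b <= d)%N ->
  #|[set j : 'I_d | (a <= j < b)%N]| = (b - a)%N.
Proof.
move=> h; rewrite -(count_iota_int h) cardsE cardE /enum_mem size_filter.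
rewrite -enumT -val_enum_ord count_map; apply: eq_count => j /=.
by [].
Qed.

Lemma bin_lt_pow (d l : nat) : (0 < d)%N -> (l <= d)%N -> ('C(d, l) < 2 ^ d)%N.
Proof.
move=> d0 ld.
have := expnDn 1 1 d; rewrite addn1 => ->.
have -> : (\sum_(i < d.+1) 'C(d, i) * (1 ^ (d - i) * 1 ^ i) = \sum_(i < d.+1) 'C(d, i))%N.
  by apply: eq_bigr => i _; rewrite !exp1n !muln1.
pose i0 : 'I_d.+1 := inord l.
pose j0 : 'I_d.+1 := if l == 0%N then ord_max else ord0.
have hi0 : nat_of_ord i0 = l by rewrite /i0 inordK.
have hne : j0 != i0.
  apply/eqP => /(congr1 (@nat_of_ord _)); rewrite hi0 /j0; case: eqP => /= [->|h] //; lia.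
rewrite (bigD1 i0) //= (bigD1 j0) //= hi0.
have : (0 < 'C(d, j0))%N by rewrite bin_gt0 /j0; case: eqP => /= _; lia.
lia.
Qed.

Lemma big3 (T : Type) (idx : T) (op : Monoid.com_law idx) (d a b : nat)
  (S : {set 'I_d}) (F : 'I_d -> T) : (a <= b)%N ->
  \big[op/idx]_(j in S) F j =
  op (op (\big[op/idx]_(j in S :&: [set j : 'I_d | (j < a)%N]) F j)
         (\big[op/idx]_(j in S :&: [set j : 'I_d | (a <= j < b)%N]) F j))
     (\big[op/idx]_(j in S :&: [set j : 'I_d | (b <= j)%N]) F j).
Proof.
move=> hab.
rewrite (bigID (fun j : 'I_d => (j < a)%N)) /=.
rewrite [X in op _ X](bigID (fun j : 'I_d => (j < b)%N)) /= Monoid.mulmA.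
congr (op (op _ _) _); apply: eq_bigl => j; rewrite !inE.
- by [].
- by rewrite -leqNgt andbA.
- rewrite -!leqNgt -andbA; congr (_ && _).
  by apply/idP/idP => [/andP[]//|h]; rewrite h andbT (leq_trans hab h).
Qed.
Unset Implicit Arguments.
Set Strict Implicit.

Theorem mainTheorem4 (C : numClosedFieldType) (d : nat) (Z : nat -> C) (R : C)
    (i1 i2 l : nat)
    (hZ0 : forall i, (1 <= i <= d)%N -> Z i != 0)
    (hmono : forall i, (1 <= i)%N -> (i < d)%N -> `|Z i| <= `|Z i.+1|)
    (hnconst : exists i j, [/\ (1 <= i <= d)%N, (1 <= j <= d)%N & `|Z i| != `|Z j|])
    (hR : is_min_ratio d Z R)
    (hi1 : inI d Z i1) (hi2 : inI d Z i2) (hi12 : (i1 < i2)%N)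
    (hsucc : forall k, (i1 < k)%N -> (k < i2)%N -> ~~ inI d Z k)
    (hl1 : (i1 < l)%N) (hl2 : (l < i2)%N) :
  let c' := (('C(d, l))%N%:R - ('C(i2 - i1, i2 - l))%N%:R) / R in
  `|elem_sym d Z (d - l)|
    <= (('C(i2 - i1, i2 - l))%N%:R + c') * `|Z i2| ^+ (i2 - l)
       * \prod_(i2.+1 <= j < d.+1) `|Z j|
  /\ c' < 2 ^+ d / R.
Proof.
move=> c'.
have [i0 [j0 [/andP[hi0a hi0b] _ _]]] := hnconst.
have d0 : (0 < d)%N by lia.
have i2d : (i2 <= d)%N.
  by move: hi2; rewrite /inI => /or3P[/eqP->|/eqP->|/and3P[_ h _]]; lia.
have wpos : forall j, (1 <= j <= d)%N -> 0 < `|Z j|.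
  by move=> j hj; rewrite normr_gt0 hZ0.
have mono : forall i k, (1 <= i)%N -> (i + k <= d)%N -> `|Z i| <= `|Z (i + k)%N|.
  move=> i k hi; elim: k => [|k IH] hk; first by rewrite addn0.
  apply: le_trans (IH _) _; first lia.
  rewrite addnS; apply: hmono; lia.
have mono2 : forall i j, (1 <= i)%N -> (i <= j)%N -> (j <= d)%N -> `|Z i| <= `|Z j|.
  move=> i j hi hij hj; have -> : j = (i + (j - i))%N by lia.
  apply: mono => //; lia.
have strict : forall i, inI d Z i -> (1 <= i)%N -> (i < d)%N -> `|Z i| < `|Z i.+1|.
  move=> i; rewrite /inI => /or3P[/eqP->|/eqP->|/and3P[_ _ h]] h1 h2 //; exfalso; lia.
case: hR => [[ir [hir1 hird hirlt hReq]] hRmin].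
have R1 : 1 < R.
  by rewrite hReq ltr_pdivlMr ?mul1r // wpos //; apply/andP; split; lia.
have Rpos : 0 < R by apply: lt_trans R1.
have step : forall j, (i1 < j)%N -> (j < i2)%N -> `|Z j| = `|Z j.+1|.
  move=> j h1 h2; apply/eqP.
  have := hmono j ltac:(lia) ltac:(lia); rewrite le_eqVlt => /orP[//|lt].
  exfalso; move: (hsucc j h1 h2); rewrite /inI => /negP; apply.
  apply/or3P; apply: Or33; apply/and3P; split => //; lia.
have blk0 : forall k, (i1 < i2 - k)%N -> `|Z (i2 - k)%N| = `|Z i2|.
  elim=> [|k IH] h; first by rewrite subn0.
  rewrite step; [|lia|lia].
  have -> : (i2 - k.+1).+1 = (i2 - k)%N by lia.
  apply: IH; lia.
have blk : forall j, (i1 < j <= i2)%N -> `|Z j| = `|Z i2|.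
  move=> j hj; have -> : j = (i2 - (i2 - j))%N by lia.
  apply: blk0; lia.
have low : forall j, (1 <= j <= i1)%N -> `|Z j| * R <= `|Z i2|.
  move=> j hj.
  have hs := strict i1 hi1 ltac:(lia) ltac:(lia).
  have := hRmin i1 ltac:(lia) ltac:(lia) hs.
  rewrite ler_pdivlMr ?wpos; last by apply/andP; split; lia.
  rewrite -(blk i1.+1); last lia.
  move=> h; apply: (le_trans _ h); rewrite [_ * R]mulrC; apply: ler_wpM2l; first exact: ltW.
  apply: mono2; lia.
  by [].
have high : forall j, (i2 < j <= d)%N -> R * `|Z i2| <= `|Z j|.
  move=> j hj.
  have hs := strict i2 hi2 ltac:(lia) ltac:(lia).
  have := hRmin i2 ltac:(lia) ltac:(lia) hs.
  rewrite ler_pdivlMr ?wpos; last by apply/andP; split; lia.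
  move=> h; apply: (le_trans h); apply: mono2; lia.
  by [].
set m := `|Z i2|.
have mpos : 0 < m by apply: wpos; lia.
set Low := [set j : 'I_d | (j < i1)%N].
set Blk := [set j : 'I_d | (i1 <= j < i2)%N].
set High := [set j : 'I_d | (i2 <= j)%N].
have cHigh : #|High| = (d - i2)%N.
  have -> : High = [set j : 'I_d | (i2 <= j < d)%N].
    by apply/setP => j; rewrite !inE ltn_ord andbT.
  by apply: card_int; lia.
have cBlk : #|Blk| = (i2 - i1)%N by apply: card_int; lia.
set F := fun j : 'I_d => `|Z j.+1|.
have Fge0 : forall j, 0 <= F j by move=> j; rewrite /F normr_ge0.
have hprodH : \prod_(j in High) F j = \prod_(i2.+1 <= j < d.+1) `|Z j|.
  rewrite big_add1 /= big_geq_mkord; apply: eq_bigl => j; by rewrite inE.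
set M := m ^+ (i2 - l) * \prod_(i2.+1 <= j < d.+1) `|Z j|.
have Mge0 : 0 <= M.
  by rewrite /M -hprodH; apply: mulr_ge0; [apply: exprn_ge0; apply: ltW|apply: prodr_ge0].
set top := fun S : {set 'I_d} => (S :&: Low == set0) && (High \subset S).
have key : forall S : {set 'I_d}, #|S| = (d - l)%N ->
    \prod_(j in S) F j * R ^+ (#|S :&: Low| + #|High :\: S|) <= M.
  move=> S hS.
  set a := #|S :&: Low|; set b := #|S :&: Blk|; set c := #|S :&: High|.
  set x := #|High :\: S|.
  have hcard : #|S| = (a + b + c)%N.
    by rewrite -sum1_card (@big3 _ _ _ d i1 i2) ?(ltnW hi12) // !sum1_card.
  have hcx : #|High| = (c + x)%N by rewrite -(cardsID S High) setIC.
  have hab : (a + b = x + (i2 - l))%N by lia.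
  have hA : \prod_(j in S :&: Low) F j * R ^+ a <= m ^+ a.
    have -> : m ^+ a = \prod_(j in S :&: Low) m by rewrite prodr_const.
    have -> : \prod_(j in S :&: Low) F j * R ^+ a = \prod_(j in S :&: Low) (F j * R).
      by rewrite big_split /= prodr_const.
    apply: ler_prod => j; rewrite inE => /andP[_]; rewrite inE => hj.
    rewrite mulr_ge0 ?Fge0 ?(ltW Rpos) //=; apply: low; lia.
  have hB : \prod_(j in S :&: Blk) F j = m ^+ b.
    rewrite -prodr_const; apply: eq_bigr => j; rewrite inE => /andP[_]; rewrite inE => hj.
    rewrite /F blk //; lia.
  have hD : (R * m) ^+ x <= \prod_(j in High :\: S) F j.
    rewrite -prodr_const; apply: ler_prod => j; rewrite !inE => /andP[_ hj].
    rewrite mulr_ge0 ?(ltW Rpos) ?(ltW mpos) //=; apply: high; have := ltn_ord j; lia.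
  have hH : \prod_(j in High) F j = \prod_(j in S :&: High) F j * \prod_(j in High :\: S) F j.
    by rewrite (bigID (mem S)) /=; congr (_ * _); apply: eq_bigl => j; rewrite !inE andbC.
  have hP : \prod_(j in S) F j = \prod_(j in S :&: Low) F j * m ^+ b * \prod_(j in S :&: High) F j.
    by rewrite (@big3 _ _ _ d i1 i2) ?(ltnW hi12) //= -hB.
  have mx : 0 < m ^+ x by apply: exprn_gt0.
  rewrite -(ler_pM2r mx).
  have -> : \prod_(j in S) F j * R ^+ (a + x) * m ^+ x =
     (\prod_(j in S :&: Low) F j * R ^+ a) * m ^+ b * (\prod_(j in S :&: High) F j * (R * m) ^+ x).
    rewrite hP exprD exprMn; ring.
  have -> : M * m ^+ x = m ^+ a * m ^+ b * \prod_(j in High) F j.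
    by rewrite /M -hprodH -exprD hab exprD; ring.
  rewrite hH; apply: ler_pM.
  - apply: mulr_ge0; last by apply: exprn_ge0; apply: ltW.
    by apply: mulr_ge0; [apply: prodr_ge0 | apply: exprn_ge0; apply: ltW].
  - by apply: mulr_ge0; [apply: prodr_ge0 | apply: exprn_ge0; apply: mulr_ge0; apply: ltW].
  - by rewrite ler_pM2r //; apply: exprn_gt0.
  - by apply: ler_pM => //; [apply: prodr_ge0|apply: exprn_ge0; apply: mulr_ge0; apply: ltW].
have bnd : forall S : {set 'I_d}, #|S| = (d - l)%N ->
    `|\prod_(j in S) Z j.+1| <= (if top S then M else M / R).
  move=> S hS; rewrite normr_prod -/(F _).
  have P0 : 0 <= \prod_(j in S) F j by apply: prodr_ge0.
  have := key S hS; set k := (#|S :&: Low| + #|High :\: S|)%N => hk.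
  case: ifP => htop.
    apply: le_trans hk; apply: ler_peMr => //; apply: exprn_ege1; exact: ltW.
  have k0 : (0 < k)%N.
    rewrite /k addn_gt0 !lt0n !cards_eq0 setD_eq0 -negb_and; apply/negP => /andP[h1 h2].
    by move: htop; rewrite /top h1 h2.
  rewrite ler_pdivlMr //; apply: le_trans hk; apply: ler_wpM2l => //.
  by apply: ler_eXnr => //; exact: ltW.
have topeq : forall S : {set 'I_d}, top S -> S = S :&: Blk :|: High.
  move=> S /andP[/eqP hL /subsetP hH]; apply/setP => j; rewrite !inE.
  have hLj : (j \in S) -> ~~ (j < i1)%N.
    move=> hj; apply/negP => hj'.
    have : j \in S :&: Low by rewrite !inE hj hj'.
    by rewrite hL inE.
  case hj: (j \in S) => /=.
    case: (ltnP j i2) => hji2 /=; rewrite ?orbT ?andbT ?orbF //.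
    by move/hLj: hj; rewrite -leqNgt => ->.
  apply/esym/negP => h; have : j \in High by rewrite inE.
  by move/hH; rewrite hj.
set k := (d - l)%N.
set T := [set S : {set 'I_d} | (#|S| == k) && top S].
set U := [set S : {set 'I_d} | (#|S| == k) && ~~ top S].
have ht : (#|T| <= 'C(i2 - i1, i2 - l))%N.
  rewrite -(@card_in_imset _ _ (fun S => S :&: Blk)); last first.
    move=> S1 S2; rewrite !inE => /andP[_ t1] /andP[_ t2] e.
    by rewrite (topeq _ t1) (topeq _ t2) e.
  rewrite -cBlk -cards_draws; apply: subset_leq_card.
  apply/subsetP => A /imsetP [S hS ->]; move: hS; rewrite !inE subsetIr /= => /andP[/eqP hS tS].
  have := cardsU (S :&: Blk) High.
  have -> : S :&: Blk :&: High = set0.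
    apply/setP => j; rewrite !inE; apply/negP => /andP[/andP[_ /andP[_ h1]] h2]; by move: h2; rewrite leqNgt h1.
  rewrite cards0 subn0 -(topeq _ tS) hS cHigh /k => h; apply/eqP; rewrite [LHS](_ : _ = (d - l - (d - i2))%N); [clear -hl2 i2d; lia|by rewrite h addnK].
have hTU : (#|T| + #|U| = 'C(d, l))%N.
  have <- : #|[set S : {set 'I_d} | #|S| == k]| = 'C(d, l).
    by rewrite card_draws card_ord bin_sub // ltnW // (leq_trans hl2 i2d).
  have -> : T = [set S : {set 'I_d} | #|S| == k] :&: [set S : {set 'I_d} | top S].
    by apply/setP => S; rewrite !inE.
  have -> : U = [set S : {set 'I_d} | #|S| == k] :\: [set S : {set 'I_d} | top S].
    by apply/setP => S; rewrite !inE andbC.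
  by rewrite cardsID.
have hsum : `|elem_sym d Z k| <= M *+ #|T| + (M / R) *+ #|U|.
  rewrite /elem_sym; apply: le_trans (ler_norm_sum _ _ _) _.
  apply: le_trans (ler_sum _ (fun S hS => bnd S (eqP hS))) _.
  rewrite (bigID top) /=.
  rewrite -!sumr_const; apply: lerD; rewrite le_eqVlt; apply/orP; left; apply/eqP.
    by apply: eq_big => S; [rewrite inE | move=> /andP[_ ->]].
  by apply: eq_big => S; [rewrite inE | move=> /andP[_ /negbTE ->]].
split.
  rewrite -mulrA -/M; apply: le_trans hsum _.
  rewrite /c' -hTU.
  have [e he] : exists e, 'C(i2 - i1, i2 - l) = (#|T| + e)%N.
    by exists ('C(i2 - i1, i2 - l) - #|T|)%N; rewrite subnKC.
  rewrite he !natrD.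
  have R0 : R != 0 by rewrite gt_eqF.
  have -> : (#|T|%:R + e%:R + (#|T|%:R + #|U|%:R - (#|T|%:R + e%:R)) / R) * M =
     M *+ #|T| + (M / R) *+ #|U| + e%:R * (M - M / R).
    rewrite -(mulr_natr M) -(mulr_natr (M / R)); field; done.
  rewrite lerDl; apply: mulr_ge0 => //; rewrite subr_ge0 ler_pdivrMr //.
  by apply: ler_peMr => //; exact: ltW.
rewrite /c' ltr_pM2r ?invr_gt0 //.
apply: (@le_lt_trans _ _ ('C(d, l)%:R)).
  by rewrite lerBlDr lerDl ler0n.
by rewrite -natrX ltr_nat; apply: bin_lt_pow => //; apply: ltnW; apply: (leq_trans hl2 i2d).
Qed.
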